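(* Let $G=(V,E)$ be a finite, undirected, connected graph with $V=\{1,\dots,N\}$ and neighbourhoods $N(i)$. For $t\ge0$ and $j\in N(i)$ let $m_{ij}(t)\ge0$ be the transition rates of a reference process, set $m_{ii}(t)=-\sum_{j\in N(i)}m_{ij}(t)$ (so the reference process is mass-preserving), and let the reference marginal evolve by $\frac{d}{dt}\tilde\rho_i=\sum_{j\in N(i)}\big(m_{ji}\tilde\rho_j-m_{ij}\tilde\rho_i\big)$. Assume the reference process possesses a stationary measure $\rho^*$, i.e. $\rho^*$ is a probability vector with $\rho^*_i>0$ for all $i$ and $\sum_{j\in N(i)}\big(m_{ji}(t)\rho^*_j-m_{ij}(t)\rho^*_i\big)=0$ for all $i\in V$ and $t\ge0$. Consider the Hamiltonian system on $\{\rho\in\mathbb R^N:\rho_i>0\}\times\mathbb R^N$ $$\frac{\partial S_i}{\partial t}=-m_{ii}-\frac12\sum_{j\in N(i)}e^{S_j-S_i}m_{ij}\frac{\sqrt{\rho_j}}{\sqrt{\rho_i}}-\frac12\sum_{j\in N(i)}e^{S_i-S_j}m_{ji}\frac{\sqrt{\rho_j}}{\sqrt{\rho_i}},$$ $$\frac{\partial\rho_i}{\partial t}=\sum_{j\in N(i)}e^{S_i-S_j}m_{ji}\sqrt{\rho_j\rho_i}-\sum_{j\in N(i)}e^{S_j-S_i}m_{ij}\sqrt{\rho_i\rho_j},\qquad i\in V.$$ Then there exists $S^*\in\mathbb R^N$ such that $(\rho^*,S^* )$ is a stationary point of this system, i.e. the constant pair $(\rho(t),S(t))\equiv(\rho^*,S^*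 )$ is a solution.
   Context: This system is the Hamiltonian system $\partial_t\rho=\partial_S\tilde{\mathcal H}$, $\partial_tS=-\partial_\rho\tilde{\mathcal H}$ with Hamiltonian $\tilde{\mathcal H}(\rho,S)=\sum_{i\in V}\sum_{j\in N(i)}e^{S_j-S_i}m_{ij}\sqrt{\rho_i\rho_j}$ (using $m_{ii}=-\sum_{j\in N(i)}m_{ij}$), obtained from the critical point equations of the discrete Schrödinger bridge problem (relative entropy with respect to the reference process) via the change of variables $S=\psi-\frac12\ln\rho$. *)

(* Defs.v *)
From HB Require Import structures.
From mathcomp Require Import all_boot all_order all_algebra.
From mathcomp Require Import all_classical all_reals all_analysis.
Set Implicit Arguments. Unset Strict Implicit. Unset Printing Implicit Defensive.
Import Order.TTheory GRing.Theory Num.Theory.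
Local Open Scope ring_scope.

(* A finite simple undirected graph on V = 'I_N (vertices 1..N renamed 0..N-1),
   given by an adjacency relation e; N(i) = [pred j | e i j]. *)
Definition simple_graph (N : nat) (e : rel 'I_N) : Prop :=
  (forall i, ~~ e i i) /\ (forall i j, e i j = e j i).

Definition graph_connected (N : nat) (e : rel 'I_N) : Prop :=
  forall i j, connect e i j.

Definition mdiag (R : realType) (N : nat) (e : rel 'I_N)
  (m : R -> 'I_N -> 'I_N -> R) (t : R) (i : 'I_N) : R :=
  - \sum_(j | e i j) m t i j.

Definition dS_field (R : realType) (N : nat) (e : rel 'I_N)
  (m : R -> 'I_N -> 'I_N -> R) (t : R) (rho S : 'I_N -> R) (i : 'I_N) : R :=
  - mdiag e m t i
  - 2^-1 * \sum_(j | e i j)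
        expR (S j - S i) * m t i j * (Num.sqrt (rho j) / Num.sqrt (rho i))
  - 2^-1 * \sum_(j | e i j)
        expR (S i - S j) * m t j i * (Num.sqrt (rho j) / Num.sqrt (rho i)).

Definition drho_field (R : realType) (N : nat) (e : rel 'I_N)
  (m : R -> 'I_N -> 'I_N -> R) (t : R) (rho S : 'I_N -> R) (i : 'I_N) : R :=
  \sum_(j | e i j) expR (S i - S j) * m t j i * Num.sqrt (rho j * rho i)
  - \sum_(j | e i j) expR (S j - S i) * m t i j * Num.sqrt (rho i * rho j).

Definition is_solution (R : realType) (N : nat) (e : rel 'I_N)
  (m : R -> 'I_N -> 'I_N -> R) (rho S : R -> 'I_N -> R) : Prop :=
  forall t : R, 0 <= t -> forall i : 'I_N,
    0 < rho t i /\
    is_derive t 1 (fun s => S s i) (dS_field e m t (rho t) (S t) i) /\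
    is_derive t 1 (fun s => rho s i) (drho_field e m t (rho t) (S t) i).

(* Main.v *)
Require Import Defs.
From HB Require Import structures.
From mathcomp Require Import all_boot all_order all_algebra.
From mathcomp Require Import all_classical all_reals all_analysis.
From mathcomp Require Import ring lra.
Import Order.TTheory GRing.Theory Num.Theory.
Local Open Scope ring_scope.

Lemma expS_aux (R : realType) (a b : R) : 0 < a -> 0 < b ->
  expR (- ln (Num.sqrt a) - - ln (Num.sqrt b)) = Num.sqrt b / Num.sqrt a.
Proof.
move=> ha hb.
have sa : 0 < Num.sqrt a by rewrite sqrtr_gt0.
have sb : 0 < Num.sqrt b by rewrite sqrtr_gt0.
rewrite opprK addrC expRD expRN !lnK ?posrE //.
Qed.

Theorem mainTheorem3 (R : realType) (N : nat) (e : rel 'I_N)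
  (m : R -> 'I_N -> 'I_N -> R) (rhostar : 'I_N -> R) :
  simple_graph e ->
  graph_connected e ->
  (forall t : R, 0 <= t -> forall i j : 'I_N, e i j -> 0 <= m t i j) ->
  (forall i, 0 < rhostar i) ->
  \sum_i rhostar i = 1 ->
  (forall t : R, 0 <= t -> forall i : 'I_N,
     \sum_(j | e i j) (m t j i * rhostar j - m t i j * rhostar i) = 0) ->
  exists Sstar : 'I_N -> R,
    is_solution e m (fun _ => rhostar) (fun _ => Sstar).
Proof.
move=> _ _ _ hpos _ hst.
exists (fun i => - ln (Num.sqrt (rhostar i))).
move=> t ht i; split; first exact: hpos.
have sq : forall k, Num.sqrt (rhostar k) ^+ 2 = rhostar k.
  by move=> k; rewrite sqr_sqrtr // ltW.
have sp : forall k, 0 < Num.sqrt (rhostar k) by move=> k; rewrite sqrtr_gt0.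
have H := hst t ht i.
rewrite big_split /= sumrN in H.
move/eqP: H; rewrite subr_eq0 -mulr_suml => /eqP H.
split.
- suff -> : dS_field e m t rhostar (fun i => - ln (Num.sqrt (rhostar i))) i = 0.
    exact: is_derive_cst.
  rewrite /dS_field /mdiag opprK /=.
  have E1 : \sum_(j | e i j) expR (- ln (Num.sqrt (rhostar j)) - - ln (Num.sqrt (rhostar i)))
      * m t i j * (Num.sqrt (rhostar j) / Num.sqrt (rhostar i)) = \sum_(j | e i j) m t i j.
    apply: eq_bigr => j _; rewrite expS_aux //.
    have := sp i; have := sp j; move=> a b.
    field; apply/andP; split; rewrite gt_eqF //.
  have E2 : \sum_(j | e i j) expR (- ln (Num.sqrt (rhostar i)) - - ln (Num.sqrt (rhostar j)))
      * m t j i * (Num.sqrt (rhostar j) / Num.sqrt (rhostar i)) =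
      \sum_(j | e i j) m t j i * rhostar j / rhostar i.
    apply: eq_bigr => j _; rewrite expS_aux // -[in RHS](sq i) -[in RHS](sq j).
    have := sp i; have := sp j; move=> a b.
    field; rewrite gt_eqF //.
  rewrite E1 E2 -mulr_suml H.
  have := hpos i => a.
  field; rewrite gt_eqF //.
- suff -> : drho_field e m t rhostar (fun i => - ln (Num.sqrt (rhostar i))) i = 0.
    exact: is_derive_cst.
  rewrite /drho_field /=.
  have E1 : \sum_(j | e i j) expR (- ln (Num.sqrt (rhostar i)) - - ln (Num.sqrt (rhostar j)))
      * m t j i * Num.sqrt (rhostar j * rhostar i) = \sum_(j | e i j) m t j i * rhostar j.
    apply: eq_bigr => j _; rewrite expS_aux // sqrtrM ?ltW // -[in RHS](sq j).
    have := sp i; have := sp j; move=> a b.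
    field; rewrite gt_eqF //.
  have E2 : \sum_(j | e i j) expR (- ln (Num.sqrt (rhostar j)) - - ln (Num.sqrt (rhostar i)))
      * m t i j * Num.sqrt (rhostar i * rhostar j) = \sum_(j | e i j) m t i j * rhostar i.
    apply: eq_bigr => j _; rewrite expS_aux // sqrtrM ?ltW // -[in RHS](sq i).
    have := sp i; have := sp j; move=> a b.
    field; rewrite gt_eqF //.
  by rewrite E1 E2 H -mulr_suml subrr.
Qed.
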